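(* Let $(a,b,c,\lambda)\in(\mathbb F^\times)^4$ and $(\mu,\varphi,\omega^*,\omega^\varepsilon)\in\mathbb F^\times\times\mathbb F^3$. Suppose a $\triangle_q$-module $V$ contains a nonzero vector $v$ with $Bv=(\mu+\mu^{-1})v$, $(B-\mu q^2-\mu^{-1}q^{-2})Av=(q-q^{-1})\varphi v$, $\beta v=\omega^*v$ and $\gamma v=\omega^\varepsilon v$. Then $(a,b,c,\lambda)$ is feasible for $(\mu,\varphi,\omega^*,\omega^\varepsilon)$ if and only if both (i) $\mu=b\lambda^{-1}$ and (ii) there exists a $\triangle_q$-module homomorphism $M_\lambda(a,b,c)\to V$ sending $m_0$ to $v$.
   Context: $\mathbb F$ is an algebraically closed field and $q\in\mathbb F^\times$ is a root of unity of order $d\notin\{1,2,4\}$. $\triangle_q$ is the unital associative $\mathbb F$-algebra with generators $A,B,C$ subject to: each of $A+\frac{qBC-q^{-1}CB}{q^2-q^{-2}}$, $B+\frac{qCA-q^{-1}AC}{q^2-q^{-2}}$, $C+\frac{qAB-q^{-1}BA}{q^2-q^{-2}}$ is central; $\alpha,\beta,\gamma$ denote these multiplied by $q+q^{-1}$. For $(a,b,c,\lambda)\in(\mathbb F^\times)^4$, $i\in\mathbb N$: $\theta_i=a\lambda^{-1}q^{2i}+a^{-1}\lambda q^{-2i}$, $\theta_i^*=b\lambda^{-1}q^{2i}+b^{-1}\lambda q^{-2i}$, $\varphi_i=a^{-1}b^{-1}\lambda q(q^i-q^{-i})(\lambda^{-1}q^{i-1}-\lambda q^{1-i})(q^{-i}-abc\lambda^{-1}q^{i-1})(q^{-i}-abc^{-1}\lambda^{-1}q^{i-1})$.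 $M_\lambda(a,b,c)$ is the $\triangle_q$-module with basis $\{m_i\}_{i\in\mathbb N}$ with $(A-\theta_i)m_i=m_{i+1}$, $(B-\theta_i^* )m_i=\varphi_im_{i-1}$, and $\alpha,\beta,\gamma$ acting as $(b+b^{-1})(c+c^{-1})+(a+a^{-1})(\lambda q+\lambda^{-1}q^{-1})$, $(c+c^{-1})(a+a^{-1})+(b+b^{-1})(\lambda q+\lambda^{-1}q^{-1})$, $(a+a^{-1})(b+b^{-1})+(c+c^{-1})(\lambda q+\lambda^{-1}q^{-1})$. $(a,b,c,\lambda)$ is called feasible for $(\mu,\varphi,\omega^*,\omega^\varepsilon)$ if $\mu=b\lambda^{-1}$, $\varphi=(c+c^{-1})(\lambda-\lambda^{-1})-(a+a^{-1})(bq-b^{-1}q^{-1})$, $\omega^*=(c+c^{-1})(a+a^{-1})+(b+b^{-1})(\lambda q+\lambda^{-1}q^{-1})$, and $\omega^\varepsilon=(a+a^{-1})(b+b^{-1})+(c+c^{-1})(\lambda q+\lambda^{-1}q^{-1})$. *)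

(* Defs.v *)
From HB Require Import structures.
From mathcomp Require Import all_boot all_order all_algebra.
Set Implicit Arguments. Unset Strict Implicit. Unset Printing Implicit Defensive.
Import Order.TTheory GRing.Theory.
Local Open Scope ring_scope.

Section TriQ.
Variable F : fieldType.
Variable q : F.

Section Mod.
Variable V : lmodType F.
Variables A B C : V -> V.

Definition centA (x : V) : V :=
  A x + (q ^+ 2 - q^-2)^-1 *: (q *: B (C x) - q^-1 *: C (B x)).
Definition centB (x : V) : V :=
  B x + (q ^+ 2 - q^-2)^-1 *: (q *: C (A x) - q^-1 *: A (C x)).
Definition centC (x : V) : V :=
  C x + (q ^+ 2 - q^-2)^-1 *: (q *: A (B x) - q^-1 *: B (A x)).

Definition alpha_op (x : V) : V := (q + q^-1) *: centA x.
Definition beta_op (x : V) : V := (q + q^-1) *: centB x.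
Definition gamma_op (x : V) : V := (q + q^-1) *: centC x.

(* A,B,C (linear operators) define a Delta_q-module structure on V iff the
   three elements above commute with the generators A, B, C (i.e. are central). *)
Definition commutes (X Y : V -> V) := forall x, X (Y x) = Y (X x).
Definition is_triq_module : Prop :=
  (commutes centA A /\ commutes centA B /\ commutes centA C) /\
  (commutes centB A /\ commutes centB B /\ commutes centB C) /\
  (commutes centC A /\ commutes centC B /\ commutes centC C).
End Mod.

(* realised on {poly F}, with basis m_i = 'X^i *)
Section Mlam.
Variables a b c lam : F.

Definition theta (i : nat) : F := a / lam * q ^+ (2 * i) + lam / a * q ^- (2 * i).
Definition thetas (i : nat) : F := b / lam * q ^+ (2 * i) + lam / b * q ^- (2 * i).
Definition phi (i : nat) : F :=
  a^-1 * b^-1 * lam * q * (q ^+ i - q ^- i)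
  * (lam^-1 * q ^+ i / q - lam * q / q ^+ i)
  * (q ^- i - a * b * c / lam * q ^+ i / q)
  * (q ^- i - a * b / c / lam * q ^+ i / q).

Definition alphaM : F :=
  (b + b^-1) * (c + c^-1) + (a + a^-1) * (lam * q + lam^-1 * q^-1).
Definition betaM : F :=
  (c + c^-1) * (a + a^-1) + (b + b^-1) * (lam * q + lam^-1 * q^-1).
Definition gammaM : F :=
  (a + a^-1) * (b + b^-1) + (c + c^-1) * (lam * q + lam^-1 * q^-1).

(* (A - theta_i) m_i = m_{i+1} *)
Definition AM (p : {poly F}) : {poly F} :=
  'X * p + \poly_(i < size p) (theta i * p`_i).
(* (B - theta*_i) m_i = phi_i m_{i-1}  (phi_0 = 0) *)
Definition BM (p : {poly F}) : {poly F} :=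
  \poly_(i < size p) (thetas i * p`_i + phi i.+1 * p`_i.+1).
(* C is determined by gamma acting as the scalar gammaM:
   C = gammaM/(q+q^-1) - (qAB - q^-1 BA)/(q^2-q^-2) *)
Definition CM (p : {poly F}) : {poly F} :=
  (gammaM / (q + q^-1)) *: p
  - (q ^+ 2 - q^-2)^-1 *: (q *: AM (BM p) - q^-1 *: BM (AM p)).

Definition is_Mhom (V : lmodType F) (A B C : V -> V) (f : {poly F} -> V) : Prop :=
  [/\ forall p, f (AM p) = A (f p),
      forall p, f (BM p) = B (f p) &
      forall p, f (CM p) = C (f p)].
End Mlam.

Definition feasible (a b c lam mu vphi omS omE : F) : Prop :=
  [/\ mu = b / lam,
      vphi = (c + c^-1) * (lam - lam^-1) - (a + a^-1) * (b * q - b^-1 * q^-1),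
      omS = (c + c^-1) * (a + a^-1) + (b + b^-1) * (lam * q + lam^-1 * q^-1) &
      omE = (a + a^-1) * (b + b^-1) + (c + c^-1) * (lam * q + lam^-1 * q^-1)].

End TriQ.

(* Main.v *)
Require Import Defs.
From HB Require Import structures.
From mathcomp Require Import all_boot all_order all_algebra.
From mathcomp Require Import ring.
Import GRing.Theory.
Local Open Scope ring_scope.

Section Poly.
Variables (F : fieldType) (q a b c lam : F).

Lemma coef_AM p k : (AM q a lam p)`_k =
  (if k is k'.+1 then p`_k' else 0) + theta q a lam k * p`_k.
Proof.
rewrite /AM coefD coefXM coef_poly; case: ltnP => h.
  by case: k h.
by rewrite (nth_default 0 h) mulr0; case: k h.
Qed.

Lemma coef_BM p k : (BM q a b c lam p)`_k =
  thetas q b lam k * p`_k + phi q a b c lam k.+1 * p`_k.+1.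
Proof.
rewrite /BM coef_poly; case: ltnP => h //.
by rewrite (nth_default 0 h) (nth_default 0 (leqW h)) !mulr0 addr0.
Qed.

Lemma phi0 : phi q a b c lam 0 = 0.
Proof. by rewrite /phi !expr0 invr1 subrr !mulr0 !mul0r. Qed.

Lemma AM_Xn k : AM q a lam ('X^k) = 'X^(k.+1) + theta q a lam k *: 'X^k.
Proof.
apply/polyP => j; rewrite coef_AM coefD coefZ !coefXn.
case: j => [|j] /=.
  by case: (eqVneq 0%N k) => [<-|_]; rewrite ?mulr0 ?mulr1.
rewrite coefXn eqSS; case: (eqVneq j.+1 k) => [<-|_]; rewrite ?mulr0 ?mulr1 //.
Qed.

Lemma BM_Xn k : BM q a b c lam ('X^k) =
  thetas q b lam k *: 'X^k + phi q a b c lam k *: 'X^(k.-1).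
Proof.
apply/polyP => j; rewrite coef_BM coefD !coefZ !coefXn.
case: k => [|k] /=.
  by rewrite phi0 mulr0 mul0r !addr0; case: (eqVneq j 0%N) => [->|_]; rewrite ?mulr0.
rewrite eqSS; have [->|ne] := eqVneq j k.
  by rewrite (ltn_eqF (ltnSn k)) /=; ring.
have [->|ne2] := eqVneq j k.+1; by rewrite /=; ring.
Qed.

Lemma AM_lin : linear_for *:%R (AM q a lam).
Proof.
move=> x u v; apply/polyP => j.
rewrite !(coefD, coefZ, coef_AM).
case: j => [|j]; rewrite ?coefD ?coefZ; move: (theta _ _ _ _) => T; move: (u`_ _) (v`_ _) => U W; try move: (u`_ _) (v`_ _) => U2 W2; ring.
Qed.

Lemma BM_lin : linear_for *:%R (BM q a b c lam).
Proof.
move=> x u v; apply/polyP => j.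
rewrite !(coefD, coefZ, coef_BM); ring.
Qed.
End Poly.

HB.instance Definition _ (F : fieldType) (q a lam : F) :=
  GRing.isLinear.Build F {poly F} {poly F} *:%R (AM q a lam) (@AM_lin F q a lam).
HB.instance Definition _ (F : fieldType) (q a b c lam : F) :=
  GRing.isLinear.Build F {poly F} {poly F} *:%R (BM q a b c lam) (@BM_lin F q a b c lam).

Section Comb.
Variables (F : fieldType) (V : lmodType F).

Definition comb (w : nat -> V) (x : nat -> F) : V := \sum_(j < 6) x j *: w j.

Lemma combD w x y : comb w x + comb w y = comb w (fun j => x j + y j).
Proof. by rewrite /comb -big_split; apply: eq_bigr => j _; rewrite scalerDl. Qed.
Lemma combN w x : - comb w x = comb w (fun j => - x j).
Proof. by rewrite /comb -sumrN; apply: eq_bigr => j _; rewrite scaleNr. Qed.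
Lemma combZ w c x : c *: comb w x = comb w (fun j => c * x j).
Proof. by rewrite /comb scaler_sumr; apply: eq_bigr => j _; rewrite scalerA. Qed.
Lemma comb0 w : 0 = comb w (fun j => 0).
Proof. by rewrite /comb big1 // => j _; rewrite scale0r. Qed.
Lemma combX w (k : nat) : (k < 6)%N -> w k = comb w (fun j => (j == k)%:R).
Proof.
move=> hk; rewrite /comb (bigD1 (Ordinal hk)) //= eqxx scale1r big1 ?addr0 //.
move=> j hj; rewrite (_ : (nat_of_ord j == k) = false) ?scale0r //.
by apply/negbTE; apply: contra hj => /eqP e; apply/eqP/val_inj.
Qed.
Lemma comb_eq w x y : (forall j, (j < 6)%N -> x j = y j) -> comb w x = comb w y.
Proof. by move=> h; apply: eq_bigr => j _; rewrite h. Qed.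

Lemma combE w x : comb w x = x 0%N *: w 0%N + x 1%N *: w 1%N + x 2%N *: w 2%N
   + x 3%N *: w 3%N + x 4%N *: w 4%N + x 5%N *: w 5%N.
Proof. by rewrite /comb !big_ord_recr big_ord0 /= add0r. Qed.

Definition wl (l : seq V) := fun j => nth 0 l j.

Lemma gen2 (P : V -> V -> Prop) :
  (forall w : nat -> V, P (w 0%N) (w 1%N)) -> forall w0 w1, P w0 w1.
Proof. by move=> h w0 w1; apply: (h (wl [:: w0; w1])). Qed.
Lemma gen3 (P : V -> V -> V -> Prop) :
  (forall w : nat -> V, P (w 0%N) (w 1%N) (w 2%N)) -> forall w0 w1 w2, P w0 w1 w2.
Proof. by move=> h w0 w1 w2; apply: (h (wl [:: w0; w1; w2])). Qed.
Lemma gen4 (P : V -> V -> V -> V -> Prop) :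
  (forall w : nat -> V, P (w 0%N) (w 1%N) (w 2%N) (w 3%N)) -> forall w0 w1 w2 w3, P w0 w1 w2 w3.
Proof. by move=> h w0 w1 w2 w3; apply: (h (wl [:: w0; w1; w2; w3])). Qed.
Lemma gen5 (P : V -> V -> V -> V -> V -> Prop) :
  (forall w : nat -> V, P (w 0%N) (w 1%N) (w 2%N) (w 3%N) (w 4%N)) ->
  forall w0 w1 w2 w3 w4, P w0 w1 w2 w3 w4.
Proof. by move=> h w0 w1 w2 w3 w4; apply: (h (wl [:: w0; w1; w2; w3; w4])). Qed.
Lemma gen6 (P : V -> V -> V -> V -> V -> V -> Prop) :
  (forall w : nat -> V, P (w 0%N) (w 1%N) (w 2%N) (w 3%N) (w 4%N) (w 5%N)) ->
  forall w0 w1 w2 w3 w4 w5, P w0 w1 w2 w3 w4 w5.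
Proof. by move=> h w0 w1 w2 w3 w4 w5; apply: (h (wl [:: w0; w1; w2; w3; w4; w5])). Qed.

Lemma comb_solve w x y g kk (k : nat) : (k < 6)%N ->
  comb w x = comb w y -> x k - y k = kk -> kk != 0 ->
  (forall j, (j < 6)%N -> j != k -> g j * kk = y j - x j) -> g k = 0 ->
  w k = comb w g.
Proof.
move=> hk h e k0 hg gk.
apply: (scalerI k0); apply/eqP; rewrite -subr_eq0; apply/eqP.
rewrite (@combX w k) // combZ combZ combN combD.
transitivity (comb w x + - comb w y); last by rewrite h subrr.
rewrite combN combD; apply: comb_eq => j hj.
have [->|ne] := eqVneq j k; first by rewrite gk e /=; ring.
by rewrite /= mulr0 add0r mulrC hg // opprB.
Qed.

Lemma comb_zero w x y e : comb w x = comb w y ->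
  (forall j, (0 < j < 6)%N -> x j = y j) -> w 0%N != 0 -> x 0%N - y 0%N = e -> e = 0.
Proof.
move=> h hj w0 <-.
have: comb w x + - comb w y = 0 by rewrite h subrr.
rewrite combN combD combE /=.
rewrite (hj 1%N) // (hj 2%N) // (hj 3%N) // (hj 4%N) // (hj 5%N) // !subrr !scale0r !addr0.
by move/eqP; rewrite scaler_eq0 (negbTE w0) orbF => /eqP.
Qed.
End Comb.

Ltac combify w :=
  rewrite ?(@combX _ _ w 0%N isT) ?(@combX _ _ w 1%N isT) ?(@combX _ _ w 2%N isT)
          ?(@combX _ _ w 3%N isT) ?(@combX _ _ w 4%N isT) ?(@combX _ _ w 5%N isT);
  rewrite ?(combD, combN, combZ).
Ltac combify_in w H :=
  rewrite ?(@combX _ _ w 0%N isT) ?(@combX _ _ w 1%N isT) ?(@combX _ _ w 2%N isT)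
          ?(@combX _ _ w 3%N isT) ?(@combX _ _ w 4%N isT) ?(@combX _ _ w 5%N isT) in H;
  rewrite ?(combD, combN, combZ) in H.
Ltac comb_cases := apply: comb_eq; case => [|[|[|[|[|[|?]]]]]] //= _.

Section Ops.
Variables (F : fieldType) (q : F) (V : lmodType F) (A B C : {linear V -> V}).
Hypothesis hV : is_triq_module q A B C.
Hypothesis hs : q + q^-1 != 0.

Notation kk := ((q ^+ 2 - q^-2)^-1).
Notation gop := (gamma_op q A B C).
Notation bop := (beta_op q A B C).

Definition linE := (linearD A, linearD B, linearD C, linearB A, linearB B, linearB C,
  linearN A, linearN B, linearN C, linearZZ A, linearZZ B, linearZZ C).

Lemma Cformula x : C x = (q + q^-1)^-1 *: gop x - kk *: (q *: A (B x) - q^-1 *: B (A x)).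
Proof. by rewrite /gamma_op /centC scalerA mulVf // scale1r addrK. Qed.

Lemma gammaA x : gop (A x) = A (gop x).
Proof.
case: hV => _ [_ [hCA _]].
by rewrite /gamma_op hCA linearZZ.
Qed.

Lemma betaA x : bop (A x) = A (bop x).
Proof.
case: hV => _ [[hBA _] _].
by rewrite /beta_op hBA linearZZ.
Qed.

Lemma gamma_lin c x y : gop (c *: x + y) = c *: gop x + gop y.
Proof.
rewrite /gamma_op /centC !linE.
move: (C x) (C y) (A (B x)) (A (B y)) (B (A x)) (B (A y)).
apply: gen6 => w; combify w; comb_cases; ring.
Qed.

Lemma beta_lin c x y : bop (c *: x + y) = c *: bop x + bop y.
Proof.
rewrite /beta_op /centB !linE.
move: (B x) (B y) (C (A x)) (C (A y)) (A (C x)) (A (C y)).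
apply: gen6 => w; combify w; comb_cases; ring.
Qed.
End Ops.

Lemma qpow2 (F : fieldType) (q : F) k : q ^+ (2 * k) = (q ^+ k) ^+ 2.
Proof. by rewrite mulnC exprM. Qed.

Section Fwd.
Variables (F : fieldType) (q : F) (V : lmodType F) (A B C : {linear V -> V}).
Hypothesis hV : is_triq_module q A B C.
Hypothesis hq0 : q != 0.
Hypothesis hq2 : q ^+ 2 - q^-2 != 0.
Hypothesis hs : q + q^-1 != 0.
Hypothesis hd : q - q^-1 != 0.
Variables (a b c lam mu vphi omS omE : F) (v : V).
Hypotheses (ha : a != 0) (hb : b != 0) (hc : c != 0) (hlam : lam != 0).
Hypothesis hmu : mu = b / lam.
Hypothesis hvphi : vphi = (c + c^-1) * (lam - lam^-1) - (a + a^-1) * (b * q - b^-1 * q^-1).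
Hypothesis homS : omS = (c + c^-1) * (a + a^-1) + (b + b^-1) * (lam * q + lam^-1 * q^-1).
Hypothesis homE : omE = (a + a^-1) * (b + b^-1) + (c + c^-1) * (lam * q + lam^-1 * q^-1).
Hypothesis hBv : B v = (mu + mu^-1) *: v.
Hypothesis hABv : B (A v) - (mu * q ^+ 2 + mu^-1 * q^-2) *: A v = ((q - q^-1) * vphi) *: v.
Hypothesis hbeta : beta_op q A B C v = omS *: v.
Hypothesis hgamma : gamma_op q A B C v = omE *: v.

Lemma nz1 : (q * q) ^+ 2 - 1 != 0.
Proof.
apply: contraNneq hq2 => h.
have -> : q ^+ 2 - q^-2 = ((q * q) ^+ 2 - 1) / (q * q) by field.
by rewrite h mul0r.
Qed.
Lemma nz2 : q * q + 1 != 0.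
Proof.
apply: contraNneq hs => h.
have -> : q + q^-1 = (q * q + 1) / q by field.
by rewrite h mul0r.
Qed.

Notation th := (theta q a lam).
Notation ths := (thetas q b lam).
Notation ph := (phi q a b c lam).
Notation gop := (gamma_op q A B C).
Notation bop := (beta_op q A B C).

Fixpoint m_raw k := if k is k'.+1 then A (m_raw k') - th k' *: m_raw k' else v.
Fact m_key : unit. Proof. by []. Qed.
Definition m := locked_with m_key m_raw.

Lemma m0 : m 0 = v.
Proof. by rewrite /m unlock. Qed.

Lemma hA k : A (m k) = m k.+1 + th k *: m k.
Proof. by rewrite /m unlock /= subrK. Qed.

Lemma m_succ k : m k.+1 = (- th k) *: m k + A (m k).
Proof. by rewrite /m unlock /= scaleNr addrC. Qed.

Lemma gamma_m k : gop (m k) = omE *: m k.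
Proof.
elim: k => [|k IH]; first by rewrite m0. rewrite m_succ gamma_lin // gammaA // IH.
by rewrite (linearZZ A) scalerDr !scalerA [omE * _]mulrC.
Qed.

Lemma beta_m k : bop (m k) = omS *: m k.
Proof.
elim: k => [|k IH]; first by rewrite m0. rewrite m_succ beta_lin // betaA // IH.
by rewrite (linearZZ A) scalerDr !scalerA [omS * _]mulrC.
Qed.

Definition PB k := B (m k) = ths k *: m k + ph k *: m k.-1.

Lemma P0 : PB 0.
Proof.
rewrite /PB /= phi0 scale0r addr0 m0 hBv /thetas muln0 expr0 invr1 !mulr1 hmu.
by rewrite invf_div.
Qed.

Notation linF := (@linE F V A B C).

Lemma P1 : PB 1.
Proof.
rewrite /PB (_ : 1.-1 = 0)%N //.
have H := hABv.
have hB0 : B (m 0) = (mu + mu^-1) *: m 0 by rewrite m0.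
rewrite -m0 in H.
rewrite !(linF, hA, hB0) in H.
move: H; move: (B (m 1)) => X; move: (m 0) (m 1) X.
apply: gen3 => w H.
combify_in w H.
rewrite [in RHS](@combX _ _ w 1 isT) [in RHS](@combX _ _ w 0 isT).
rewrite [in RHS]combZ [in RHS]combZ [in RHS]combD.
apply: (@comb_solve _ _ w _ _ _ 1 2 isT H) => //=.
- ring.
- exact: oner_neq0.
- case => [|[|[|[|[|[|?]]]]]] //= _ _.
  all: rewrite ?hmu ?hvphi /theta /thetas /phi !qpow2 ?expr0 ?expr1 ?invr1 ?muln0.
  all: field; by rewrite ?(oner_neq0, ha, hb, hc, hlam, hq0).
Qed.

Definition thp i := a / lam * (q ^+ i) ^+ 2 / q ^+ 2 + lam / a * q ^+ 2 / (q ^+ i) ^+ 2.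

Lemma hAu_lem i : A (ph i *: m i.-1) = ph i *: m i + thp i *: (ph i *: m i.-1).
Proof.
case: i => [|i] /=.
  by rewrite phi0 !scale0r linear0 scaler0 addr0.
rewrite linearZZ hA scalerDr !scalerA [_ * ph _]mulrC; congr (_ + (_ * _) *: _).
rewrite /theta /thp qpow2 (exprS q i); field.
by rewrite ?(oner_neq0, ha, hb, hc, hlam, hq0, expf_neq0).
Qed.

Lemma Pstep i : PB i -> PB i.+1 -> PB i.+2.
Proof.
rewrite /PB /= => hB0 hB1.
have hAu := hAu_lem i.
set u := ph i *: m i.-1 in hAu hB0 *.
clearbody u.
have H := beta_m i.
rewrite /beta_op /centB (@Cformula F q V A B C hs (A (m i))) (@Cformula F q V A B C hs (m i)) (@gammaA F q V A B C hV) gamma_m in H.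
rewrite !(linF, hA, hB0, hB1, hAu) in H.
clear hAu hB0 hB1.
move: H; move: (B (m i.+2)) => X; move: u (m i) (m i.+1) (m i.+2) X.
apply: gen5 => w H.
combify_in w H.
rewrite [in RHS](@combX _ _ w 3 isT) [in RHS](@combX _ _ w 2 isT).
rewrite [in RHS]combZ [in RHS]combZ [in RHS]combD.
have ht : q ^+ i != 0 by rewrite expf_neq0.
have hK : (q + q^-1) / (q ^+ 2 - q^-2) ^+ 2 != 0.
  by rewrite mulf_neq0 // invr_neq0 // expf_neq0.
apply: (@comb_solve _ _ w _ _ _ _ 4 isT H _ hK) => //=.
- field; by rewrite ?(oner_neq0, ha, hb, hc, hlam, hq0, hq2, hs, ht, nz1, nz2).
- case => [|[|[|[|[|[|?]]]]]] //= _ _.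
  all: rewrite ?homS ?homE /thp /theta /thetas /phi !qpow2 (exprS q i.+1) (exprS q i).
  all: field; by rewrite ?(oner_neq0, ha, hb, hc, hlam, hq0, hq2, hs, ht, nz1, nz2).
Qed.

Lemma Bm k : PB k.
Proof.
suff : PB k /\ PB k.+1 by case.
elim: k => [|k [h1 h2]]; first by split; [exact: P0 | exact: P1].
by split=> //; apply: Pstep.
Qed.

Definition fM_raw (p : {poly F}) : V := \sum_(i < size p) p`_i *: m i.
Fact fM_key : unit. Proof. by []. Qed.
Definition fM := locked_with fM_key fM_raw.

Lemma fM_wide n (p : {poly F}) : (size p <= n)%N -> fM p = \sum_(i < n) p`_i *: m i.
Proof.
move=> h; rewrite /fM unlock /fM_raw (big_ord_widen n (fun i => p`_i *: m i) h) big_mkcond.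
apply: eq_bigr => i _; case: ifP => // /negbT; rewrite -leqNgt => hi.
by rewrite nth_default // scale0r.
Qed.

Lemma fM_lin : linear_for *:%R fM.
Proof.
move=> x p r /=.
set n := maxn (size (x *: p + r)) (maxn (size p) (size r)).
rewrite !(fM_wide n) // ?/n ?leq_max ?leqnn ?orbT //.
rewrite scaler_sumr -big_split; apply: eq_bigr => i _.
by rewrite coefD coefZ scalerDl scalerA.
Qed.

HB.instance Definition _ := GRing.isLinear.Build F {poly F} V *:%R fM fM_lin.

Lemma fMZ x p : fM (x *: p) = x *: fM p.
Proof. exact: linearZZ. Qed.
Lemma fMB p r : fM (p - r) = fM p - fM r.
Proof. exact: raddfB. Qed.

Lemma fM_Xn k : fM ('X^k) = m k.
Proof.
rewrite (fM_wide k.+1) ?size_polyXn // big_ord_recr /= coefXn eqxx scale1r big1 ?add0r //.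
by move=> i _; rewrite coefXn ltn_eqF // scale0r.
Qed.

Lemma fM1 : fM 1 = v.
Proof. by rewrite -(expr0 'X) fM_Xn m0. Qed.

Lemma polyE (p : {poly F}) : p = \sum_(i < size p) p`_i *: 'X^i.
Proof. by rewrite -poly_def coefK. Qed.

Lemma homA p : fM (AM q a lam p) = A (fM p).
Proof.
rewrite [p]polyE !linear_sum; apply: eq_bigr => i _.
by rewrite !linearZZ /= AM_Xn linearD linearZZ /= !fM_Xn hA.
Qed.

Lemma homB p : fM (BM q a b c lam p) = B (fM p).
Proof.
rewrite [p]polyE !linear_sum; apply: eq_bigr => i _.
by rewrite !linearZZ /= BM_Xn linearD !linearZZ /= !fM_Xn Bm.
Qed.

Lemma gop0 : gop 0 = 0.
Proof.
have := @gamma_lin F q V A B C (-1) 0 0.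
by rewrite scaler0 addr0 scaleN1r addNr.
Qed.

Lemma gamma_fM p : gop (fM p) = omE *: fM p.
Proof.
rewrite (fM_wide (size p)) //; elim: (size p) => [|n IH].
  by rewrite !big_ord0 gop0 scaler0.
rewrite !big_ord_recr /= addrC gamma_lin // IH gamma_m.
by rewrite scalerDr !scalerA mulrC addrC.
Qed.

Lemma homC p : fM (CM q a b c lam p) = C (fM p).
Proof.
rewrite /CM !(fMB, fMZ) !(homA, homB).
rewrite (@Cformula F q V A B C hs (fM p)) gamma_fM scalerA; congr (_ *: _ - _).
by rewrite mulrC homE /gammaM.
Qed.

End Fwd.

Section Bwd.
Variables (F : fieldType) (q : F) (V : lmodType F) (A B C : {linear V -> V}).
Hypothesis hV : is_triq_module q A B C.
Hypothesis hq0 : q != 0.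
Hypothesis hq2 : q ^+ 2 - q^-2 != 0.
Hypothesis hs : q + q^-1 != 0.
Hypothesis hd : q - q^-1 != 0.
Variables (a b c lam mu vphi omS omE : F) (v : V).
Hypotheses (ha : a != 0) (hb : b != 0) (hc : c != 0) (hlam : lam != 0).
Hypothesis hmu : mu = b / lam.
Hypothesis hv0 : v != 0.
Hypothesis hBv : B v = (mu + mu^-1) *: v.
Hypothesis hABv : B (A v) - (mu * q ^+ 2 + mu^-1 * q^-2) *: A v = ((q - q^-1) * vphi) *: v.
Hypothesis hbeta : beta_op q A B C v = omS *: v.
Hypothesis hgamma : gamma_op q A B C v = omE *: v.
Variable f : {linear {poly F} -> V}.
Hypothesis hf : is_Mhom q a b c lam A B C f.
Hypothesis hf1 : f 1 = v.

Notation th := (theta q a lam).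
Notation ths := (thetas q b lam).
Notation ph := (phi q a b c lam).
Notation linF := (@linE F V A B C).

Lemma fB x y : f (x - y) = f x - f y. Proof. exact: raddfB. Qed.
Lemma fZ x y : f (x *: y) = x *: f y. Proof. exact: linearZZ. Qed.

Fact mm_key : unit. Proof. by []. Qed.
Definition mm := locked_with mm_key (fun k => f ('X^k)).

Lemma mm0 : mm 0 = v.
Proof. by rewrite /mm unlock expr0 hf1. Qed.

Lemma hA' k : A (mm k) = mm k.+1 + th k *: mm k.
Proof. by case: hf => hfA _ _; rewrite /mm unlock -hfA AM_Xn linearD linearZZ. Qed.

Lemma hB' k : B (mm k) = ths k *: mm k + ph k *: mm k.-1.
Proof. by case: hf => _ hfB _; rewrite /mm unlock -hfB BM_Xn linearD !linearZZ. Qed.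

Lemma nz1' : (q * q) ^+ 2 - 1 != 0.
Proof.
apply: contraNneq hq2 => h.
have -> : q ^+ 2 - q^-2 = ((q * q) ^+ 2 - 1) / (q * q) by field.
by rewrite h mul0r.
Qed.
Lemma nz2' : q * q + 1 != 0.
Proof.
apply: contraNneq hs => h.
have -> : q + q^-1 = (q * q + 1) / q by field.
by rewrite h mul0r.
Qed.

Lemma omE_eq : omE = gammaM q a b c lam.
Proof.
case: hf => hfA hfB hfC.
have H := hgamma.
have hv1 : f 1 != 0 by rewrite hf1.
rewrite -hf1 /gamma_op /centC in H.
rewrite -?hfC -?hfB -?hfA -?hfB /CM in H.
rewrite !(fB, fZ) in H.
move: H hv1; move: (f 1) (f (AM q a lam (BM q a b c lam 1))) (f (BM q a b c lam (AM q a lam 1))).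
apply: gen3 => w H hv1.
combify_in w H.
have h0 : gammaM q a b c lam - omE = 0.
  apply: (@comb_zero _ _ w _ _ _ H) => //=.
  - case => [|[|[|[|[|[|?]]]]]] //= _; field;
      by rewrite ?(oner_neq0, ha, hb, hc, hlam, hq0, hq2, hs, nz1', nz2').
  - field; by rewrite ?(oner_neq0, ha, hb, hc, hlam, hq0, hq2, hs, nz1', nz2').
by apply/eqP; rewrite eq_sym -subr_eq0 h0.
Qed.

Lemma vphi_eq :
  vphi = (c + c^-1) * (lam - lam^-1) - (a + a^-1) * (b * q - b^-1 * q^-1).
Proof.
have H := hABv.
have hv1 : mm 0 != 0 by rewrite mm0.
rewrite -mm0 in H.
rewrite !(linF, hA', hB') /= in H.
move: H hv1; move: (mm 0) (mm 1).
apply: gen2 => w H hv1.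
combify_in w H.
have h0 : (q - q^-1) * ((c + c^-1) * (lam - lam^-1) - (a + a^-1) * (b * q - b^-1 * q^-1) - vphi) = 0.
  apply: (@comb_zero _ _ w _ _ _ H) => //=.
  all: try case => [|[|[|[|[|[|?]]]]]] //= _.
  all: rewrite ?hmu /theta /thetas /phi ?qpow2.
  all: try (field; by rewrite ?(oner_neq0, ha, hb, hc, hlam, hq0, hq2, hs, nz1', nz2')).
move: h0 => /eqP; rewrite mulf_eq0 (negbTE hd) /= subr_eq0 => /eqP.
by move=> ->.
Qed.

Lemma omS_eq : omS = betaM q a b c lam.
Proof.
have hE := omE_eq.
have H := hbeta.
have hv1 : mm 0 != 0 by rewrite mm0.
have hg0 : gamma_op q A B C (mm 0) = omE *: mm 0 by rewrite mm0.
rewrite -mm0 /beta_op /centB in H.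
rewrite (@Cformula F q V A B C hs (A (mm 0))) (@Cformula F q V A B C hs (mm 0)) (@gammaA F q V A B C hV) hg0 in H.
rewrite !(linF, hA', hB') /= in H.
move: H hv1; move: (mm 0) (mm 1) (mm 2).
apply: gen3 => w H hv1.
combify_in w H.
have h0 : betaM q a b c lam - omS = 0.
  apply: (@comb_zero _ _ w _ _ _ H) => //=.
  all: try case => [|[|[|[|[|[|?]]]]]] //= _.
  all: rewrite ?hE /betaM /gammaM /theta /thetas /phi ?qpow2.
  all: try (field; by rewrite ?(oner_neq0, ha, hb, hc, hlam, hq0, hq2, hs, nz1', nz2')).
by apply/eqP; rewrite eq_sym -subr_eq0 h0.
Qed.

End Bwd.
Theorem theorem3p3 (F : closedFieldType) (q : F) (d : nat)
    (hq : d.-primitive_root q) (hd : d \notin [:: 1%N; 2%N; 4%N])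
    (V : lmodType F) (A B C : {linear V -> V})
    (hV : is_triq_module q A B C)
    (a b c lam mu vphi omS omE : F)
    (ha : a != 0) (hb : b != 0) (hc : c != 0) (hlam : lam != 0) (hmu : mu != 0)
    (v : V) (hv0 : v != 0)
    (hBv : B v = (mu + mu^-1) *: v)
    (hABv : B (A v) - (mu * q ^+ 2 + mu^-1 * q^-2) *: A v = ((q - q^-1) * vphi) *: v)
    (hbeta : beta_op q A B C v = omS *: v)
    (hgamma : gamma_op q A B C v = omE *: v) :
  feasible q a b c lam mu vphi omS omE <->
  (mu = b / lam /\
   exists f : {linear {poly F} -> V},
     is_Mhom q a b c lam A B C f /\ f 1 = v).
Proof.
have d0 := prim_order_gt0 hq.
have hq0 : q != 0.
  apply/negP => /eqP q0; move: (prim_expr_order hq); rewrite q0 expr0n.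
  by rewrite eqn0Ngt d0 /= => /eqP; rewrite eq_sym oner_eq0.
have hq4 : q ^+ 4 != 1.
  apply/negP => /eqP h4; have := prim_order_dvd hq 4; rewrite h4 eqxx => dv.
  have hle := dvdn_leq (isT : (0 < 4)%N) dv.
  by move: hd dv hle d0; case: (d) => [|[|[|[|[|]]]]].
have hq2 : q ^+ 2 - q^-2 != 0.
  apply: contraNneq hq4 => h.
  have : q ^+ 4 - 1 = (q ^+ 2 - q^-2) * q ^+ 2 by field.
  by rewrite h mul0r => /eqP; rewrite subr_eq0 => /eqP ->.
have [hs hdd] : q + q^-1 != 0 /\ q - q^-1 != 0.
  move: hq2; rewrite (_ : q ^+ 2 - q^-2 = (q + q^-1) * (q - q^-1)); last by field.
  by rewrite mulf_eq0 negb_or => /andP.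
split.
- case=> hmu' hvphi homS homE; split=> //.
  exists (fM F q V A a lam v : {linear {poly F} -> V}); split; last first.
    exact: fM1.
  split=> p.
  + by apply: homA.
  + by eapply homB; eassumption.
  + by eapply homC; eassumption.
- case=> hmu' [f [hf hf1]]; split=> //.
  + by eapply vphi_eq; eassumption.
  + by eapply omS_eq; eassumption.
  + by eapply omE_eq; eassumption.
Qed.
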